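(* For $n\ge 2$, the letter in position $idx$ ($1\le idx\le 2\cdot4^{n-2}-1$) of the Koch code $w_n$ equals $1$ if and only if $$idx=4^{i}(2k-1)\quad\text{for some } i\in\{0,1,\dots,n-2\},\ k\in\{1,2,\dots,4^{\,n-2-i}\}.$$ Consequently $w_n$ contains exactly $\frac{4^{n-1}-1}{3}$ letters $1$ and exactly $\frac{2(4^{n-2}-1)}{3}$ letters $0$.
   Context: Let $R_\theta$ denote counterclockwise rotation of $\mathbb R^2$ by the angle $\theta$. The standard Koch curve at step $n$ is the polygon $K_n$ with vertices $r_1,\dots,r_{4^{n-1}+1}$ defined recursively: $K_1$ has vertices $(0,0),(1,0)$; $K_{n+1}$ is obtained from $K_n$ by replacing each edge from $p$ to $q$, in order, by the four edges through the points $p,\ p+\tfrac13(q-p),\ p+\tfrac13(q-p)+\tfrac13R_{\pi/3}(q-p),\ p+\tfrac23(q-p),\ q$, and numbering the resulting vertices consecutively starting from $(0,0)$. A vertex $r_i$ ($2\le i\le 4^{n-1}$) is a sharp point if the angle $\angle r_{i-1}r_ir_{i+1}$ equals $\pi/3$. For $n\ge 2$ the Koch code at step $n$ is the word $w_n=c_1\cdots c_{2\cdot4^{n-2}-1}$ over $\{0,1\}$ with $c_k=1$ iff $r_{2k+1}$ is a sharp point of $K_n$. (Equivalently, $w_2=1$ and $w_{n+1}=w_n0w_n1w_n0w_n$.) *)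

(* Defs.v *)
From mathcomp Require Import all_boot.
Set Implicit Arguments. Unset Strict Implicit. Unset Printing Implicit Defensive.

Definition koch_step (w : seq nat) : seq nat :=
  w ++ 0 :: w ++ 1 :: w ++ 0 :: w.

(* Koch code at step n (meaningful for n >= 2): w_2 = 1, w_{n+1} = koch_step w_n.
   Letters are the natural numbers 0 and 1. *)
Definition koch_code (n : nat) : seq nat := iter (n - 2) koch_step [:: 1].

Definition koch_letter (n idx : nat) : nat := nth 0 (koch_code n) idx.-1.

(* Main.v *)
Require Import Defs.
From mathcomp Require Import all_boot.
From mathcomp Require Import zify.

Definition F (x : nat) : nat := if odd (logn 2 x) then 0 else 1.

Lemma mkseqD (G : nat -> nat) a b :
  mkseq G (a + b) = mkseq G a ++ mkseq (fun x => G (a + x)) b.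
Proof.
rewrite /mkseq iotaD map_cat; congr (_ ++ _).
by rewrite add0n -{1}(addn0 a) iotaDl -map_comp.
Qed.

Lemma logn_shift e c y : 0 < y < 2 ^ e -> logn 2 (c * 2 ^ e + y) = logn 2 y.
Proof.
case/andP=> y0 ye.
have [o co Hy] := pfactor_coprime (isT : prime 2) y0.
set a := logn 2 y in Hy *.
have o0 : 0 < o by move: y0; rewrite Hy; case: o {co Hy}.
have ae : a < e.
  rewrite -(ltn_exp2l _ _ (isT : 1 < 2)).
  apply: (leq_ltn_trans _ ye); rewrite Hy; exact: leq_pmull.
have E : c * 2 ^ e + y = (c * 2 ^ (e - a) + o) * 2 ^ a.
  by rewrite Hy mulnDl -mulnA -expnD subnK // ltnW.
rewrite E lognM ?expn_gt0 // ?addn_gt0 ?o0 ?orbT // pfactorK // logn_coprime //.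
rewrite coprime2n oddD oddM oddX /=.
move: co; rewrite coprime2n => ->; rewrite orbF.
have -> : (e - a == 0) = false by apply/eqP; lia.
by rewrite andbF.

Qed.

Lemma F_shift e c y : 0 < y < 2 ^ e -> F (c * 2 ^ e + y) = F y.
Proof. by move=> h; rewrite /F logn_shift. Qed.

Lemma code_eq m :
  iter m koch_step [:: 1] = mkseq (fun j => F j.+1) (2 * 4 ^ m - 1).
Proof.
elim: m => [|m IH]; first by [].
rewrite iterS IH.
set G := (fun j => F j.+1).
have N2 : 2 * 4 ^ m = 2 ^ (2 * m).+1 by rewrite expnS expnM.
set N := 2 ^ (2 * m).+1 in N2.
have N0 : 0 < N by rewrite expn_gt0.
have E : 2 * 4 ^ m.+1 - 1 = (N - 1) + (1 + ((N - 1) + (1 + ((N - 1) + (1 + (N - 1)))))).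
  rewrite expnS; lia.
rewrite E N2 !mkseqD /koch_step /=.
have sh (H : nat -> nat) c : (forall x, H x = c * N + x) ->
    mkseq (fun x => G (H x)) (N - 1) = mkseq G (N - 1).
  move=> HH; rewrite /mkseq; apply/eq_in_map => x; rewrite mem_iota => /andP[_ hx].
  by rewrite /G HH -addnS F_shift //; apply/andP; split => //; lia.
have LN c : 0 < c -> logn 2 (c * N) = logn 2 c + (2 * m).+1.
  by move=> c0; rewrite lognM // pfactorK.
have G1 : G (N - 1 + 0) = 0.
  rewrite /G (_ : _.+1 = 1 * N); last by lia.
  by rewrite /F LN //= oddM.
have G2 : G (N - 1 + (1 + (N - 1 + 0))) = 1.
  rewrite /G (_ : _.+1 = 2 * N); last by lia.
  by rewrite /F LN //= oddM.
have G3 : G (N - 1 + (1 + (N - 1 + (1 + (N - 1 + 0))))) = 0.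
  rewrite /G (_ : _.+1 = 3 * N); last by lia.
  by rewrite /F LN //= oddM.
rewrite G1 G2 G3 (sh _ 1); last by move=> x; lia.
rewrite (sh _ 2); last by move=> x; lia.
by rewrite (sh _ 3); last by move=> x; lia.
Qed.

Lemma cnt m : 3 * count (pred1 1) (iter m koch_step [:: 1]) + 1 = 4 ^ m.+1 /\
              3 * count (pred1 0) (iter m koch_step [:: 1]) + 2 = 2 * 4 ^ m.
Proof.
elim: m => [|m [IH1 IH2]] //.
rewrite iterS; move: IH1 IH2; set w := iter _ _ _ => IH1 IH2.
rewrite /koch_step !count_cat /= !count_cat /= !count_cat /=.
move: IH1 IH2; rewrite !expnS; move: (count_mem 1 w) (count_mem 0 w) (4 ^ m) => a b c; lia.
Qed.

Lemma Fchar idx m : 1 <= idx <= 2 * 4 ^ m - 1 ->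
  (F idx = 1 <-> exists i k : nat, [/\ i <= m, 1 <= k <= 4 ^ (m - i)
                         & idx = 4 ^ i * (2 * k - 1)]).
Proof.
case/andP=> i0 im; split.
- rewrite /F; case: ifP => // ev _.
  have [o co Hy] := pfactor_coprime (isT : prime 2) i0.
  move: co; rewrite coprime2n => oo.
  set a := logn 2 idx in ev Hy.
  have aE : a = 2 * a./2 by move: (odd_double_half a); rewrite ev add0n -mul2n.
  have o0 : 0 < o by move: oo; case: (o).
  have H4 : idx = o * 4 ^ a./2.
    rewrite {1}Hy; congr (_ * _); rewrite {1}aE expnM //.
  exists a./2, o.+1./2.
  have im' : idx < 2 * 4 ^ m by lia.
  have P : 0 < 4 ^ a./2 by rewrite expn_gt0.
  have iml : a./2 <= m.
    rewrite leqNgt; apply/negP => h.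
    have : 4 ^ m.+1 <= 4 ^ a./2 by rewrite leq_exp2l.
    rewrite expnS; have : 4 ^ a./2 <= idx by rewrite H4 leq_pmull.
    lia.
  have oE : o = (o.+1./2).*2.-1.
    by move: (odd_double_half o.+1); rewrite /= oo /=; lia.
  split => //.
  + have E : 4 ^ m = 4 ^ (m - a./2) * 4 ^ a./2 by rewrite -expnD subnK.
    have : o * 4 ^ a./2 < (2 * 4 ^ (m - a./2)) * 4 ^ a./2 by rewrite -mulnA -E -H4.
    rewrite ltn_pmul2r // => h.
    apply/andP; split; lia.
  + rewrite H4 mulnC; congr (_ * _); lia.
- case=> i [k [ii /andP[k1 _] ->]].
  rewrite /F lognM ?expn_gt0 //; last by lia.
  rewrite (_ : 4 ^ i = 2 ^ (2 * i)); last by rewrite expnM.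
  rewrite pfactorK // logn_coprime; last first.
    rewrite coprime2n (_ : 2 * k - 1 = (2 * (k - 1)).+1); last by lia.
    by rewrite /= oddM.
  by rewrite addn0 oddM.
Qed.

Theorem mainTheorem4 (n : nat) (hn : 2 <= n) :
  (forall idx : nat, 1 <= idx <= 2 * 4 ^ (n - 2) - 1 ->
     (koch_letter n idx = 1 <->
      exists i k : nat, [/\ i <= n - 2, 1 <= k <= 4 ^ (n - 2 - i)
                         & idx = 4 ^ i * (2 * k - 1)]))
  /\ count (pred1 1) (koch_code n) = (4 ^ (n - 1) - 1) %/ 3
  /\ count (pred1 0) (koch_code n) = (2 * (4 ^ (n - 2) - 1)) %/ 3.
Proof.
have -> : n - 1 = (n - 2).+1 by lia.
rewrite /koch_letter /koch_code.
move: (n - 2) => m.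
have [C1 C0] := cnt m.
split; last split.
- move=> idx hi; rewrite code_eq nth_mkseq; last by lia.
  have -> : idx.-1.+1 = idx by lia.
  exact: Fchar.
- rewrite -C1 addnK mulKn //.
- have -> : 2 * (4 ^ m - 1) = 3 * count (pred1 0) (iter m koch_step [:: 1]) by lia.
  by rewrite mulKn.
Qed.
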